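(* Let $F$ be the cumulative distribution function of the Cantor distribution and let $m$ be its mean residual life function. Then: (i) $m$ is continuous on $[0,1]$, and for every $x\in[0,1)$, $$m(x)=\frac{1}{F(1-x)}\int_0^{1-x}F(u)\,du .$$ (ii) For every $x\in(0,1)$, each of the functions $m$ and $e$ is locally decreasing at $x$ if and only if $x\in[0,1]\setminus\mathcal C$. (iii) The equation $m(x)=x$ has exactly one solution in $[0,1]$, namely $x^*=\tfrac{5}{12}$.
   Context: The Cantor set is $\mathcal C=\bigcap_{n\ge1}C_n$, where $C_0=[0,1]$ and $C_n=\tfrac13C_{n-1}\cup\left(\tfrac23+\tfrac13C_{n-1}\right)$ for $n\ge1$. The Cantor distribution is the probability distribution on $[0,1]$ that is uniform on $\mathcal C$; its CDF $F$ (the Cantor function) is continuous and nondecreasing, with $F(0)=0$ and $F(1)=1$. For a random variable $X$ on $[0,1]$ with continuous CDF $F$, the mean residual life (MRL) function is $$m(x)=\mathbb E[X-x\mid X>x]=\frac{1}{1-F(x)}\int_x^1(1-F(u))\,du \quad (x<1),\qquad m(x)=0\quad(x\ge1).$$ The generalized mean residual life function is $e(x)=m(x)/x$ for $0<x<1$. A function $f:(0,1)\to\mathbb R$ is called locally decreasing at $x\in(0,1)$ if there is an open neighborhood $U$ of $x$ such that $f|_U$ is non-increasing. *)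

(* Defs.v *)
From Stdlib Require Import Reals Lra Rtopology ClassicalEpsilon.
Open Scope R_scope.

(* C_0 = [0,1];  C_{n+1} = (1/3) C_n  U  (2/3 + (1/3) C_n). *)
Fixpoint cantor_level (n : nat) (x : R) : Prop :=
  match n with
  | O => 0 <= x <= 1
  | S k => cantor_level k (3 * x) \/ cantor_level k (3 * x - 2)
  end.

Definition cantor_set (x : R) : Prop := forall n : nat, cantor_level n x.

(* Characterization of the Cantor function (CDF of the Cantor distribution,
   on all of R): the unique nondecreasing solution of the self-similarity
   equations, with F = 0 on (-oo,0] and F = 1 on [1,+oo). *)
Definition is_cantor_cdf (F : R -> R) : Prop :=
  (forall x y, x <= y -> F x <= F y) /\
  (forall x, x <= 0 -> F x = 0) /\
  (forall x, 1 <= x -> F x = 1) /\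
  (forall x, 0 <= x <= 1/3 -> F x = F (3 * x) / 2) /\
  (forall x, 1/3 <= x <= 2/3 -> F x = 1/2) /\
  (forall x, 2/3 <= x <= 1 -> F x = 1/2 + F (3 * x - 2) / 2).

(* Total Riemann integral: the value of RiemannInt when f is Riemann
   integrable on [a,b] (RiemannInt does not depend on the proof). *)
Definition RInt (f : R -> R) (a b : R) : R :=
  epsilon (inhabits 0)
    (fun I => exists pr : Riemann_integrable f a b, RiemannInt pr = I).

Definition mrl (F : R -> R) (x : R) : R :=
  if Rlt_dec x 1 then / (1 - F x) * RInt (fun u => 1 - F u) x 1 else 0.

Definition gmrl (F : R -> R) (x : R) : R := mrl F x / x.

Definition locally_decreasing (f : R -> R) (x : R) : Prop :=
  exists U : R -> Prop, open_set U /\ U x /\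
    forall y z, U y -> U z -> 0 < y < 1 -> 0 < z < 1 -> y <= z -> f z <= f y.

(* Main.v *)
Require Import Defs.
From Stdlib Require Import Reals Rtopology.
From Stdlib Require Import Lra ClassicalEpsilon Classical.
From Coquelicot Require Import Coquelicot.
Open Scope R_scope.


Section Basics.
Variable F : R -> R.
Hypothesis HF : is_cantor_cdf F.

Lemma F_mon x y : x <= y -> F x <= F y. Proof. apply HF. Qed.
Lemma F_neg x : x <= 0 -> F x = 0. Proof. apply HF. Qed.
Lemma F_ge1 x : 1 <= x -> F x = 1. Proof. apply HF. Qed.
Lemma F_1 x : 0 <= x <= 1/3 -> F x = F (3 * x) / 2. Proof. apply HF. Qed.
Lemma F_2 x : 1/3 <= x <= 2/3 -> F x = 1/2. Proof. apply HF. Qed.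
Lemma F_3 x : 2/3 <= x <= 1 -> F x = 1/2 + F (3 * x - 2) / 2. Proof. apply HF. Qed.

Lemma F_ge0 x : 0 <= F x.
Proof.
  destruct (Rle_dec x 0). rewrite F_neg; lra.
  rewrite <- (F_neg 0) by lra. apply F_mon; lra.
Qed.
Lemma F_le1 x : F x <= 1.
Proof.
  destruct (Rle_dec 1 x). rewrite F_ge1; lra.
  rewrite <- (F_ge1 1) by lra. apply F_mon; lra.
Qed.

Lemma pow3_bounds n : 0 < (/3)^n <= 1.
Proof.
  split. apply pow_lt; lra.
  replace 1 with (1^n) by apply pow1. apply pow_incr; lra.
Qed.
Lemma pow2_bounds n : 0 < (/2)^n <= 1.
Proof.
  split. apply pow_lt; lra.
  replace 1 with (1^n) by apply pow1. apply pow_incr; lra.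
Qed.

Lemma F_mod n : forall x y, x <= y <= x + (/3)^n -> F y - F x <= (/2)^n.
Proof.
  induction n as [|n IH]; intros x y [Hxy Hyd].
  - simpl. pose proof (F_ge0 x); pose proof (F_le1 y); lra.
  - simpl in Hyd |- *. pose proof (pow3_bounds n) as He. pose proof (pow2_bounds n).
    set (e := (/3)^n) in *. set (d := (/2)^n) in *.
    pose proof (F_1 x) as A1; pose proof (F_1 y) as B1;
    pose proof (F_3 x) as A3; pose proof (F_3 y) as B3;
    pose proof (F_2 x) as A2; pose proof (F_2 y) as B2.
    destruct (Rle_dec y 0).
    { rewrite (F_neg y), (F_neg x) by lra. lra. }
    destruct (Rle_dec 1 x).
    { rewrite (F_ge1 y), (F_ge1 x) by lra. lra. }
    destruct (Rle_dec x 0).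
    { rewrite (F_neg x) by lra. rewrite B1 by lra.
      pose proof (IH 0 (3*y)) as I. rewrite (F_neg 0) in I by lra. lra. }
    destruct (Rle_dec 1 y).
    { rewrite (F_ge1 y) by lra. rewrite A3 by lra.
      pose proof (IH (3*x-2) 1) as I. rewrite (F_ge1 1) in I by lra. lra. }
    destruct (Rle_dec y (1/3)).
    { rewrite A1, B1 by lra. pose proof (IH (3*x) (3*y)). lra. }
    destruct (Rle_dec (2/3) x).
    { rewrite A3, B3 by lra. pose proof (IH (3*x-2) (3*y-2)). lra. }
    destruct (Rle_dec (1/3) x).
    { destruct (Rle_dec y (2/3)).
      { rewrite A2, B2 by lra. lra. }
      rewrite A2, B3 by lra. pose proof (IH 0 (3*y-2)) as I.
      rewrite (F_neg 0) in I by lra. lra. }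
    destruct (Rle_dec y (2/3)).
    { rewrite A1, B2 by lra. pose proof (IH (3*x) 1) as I. rewrite (F_ge1 1) in I by lra. lra. }
    lra.
Qed.

Lemma small_pow r eps : 0 <= r < 1 -> 0 < eps -> exists N, r ^ N < eps.
Proof.
  intros Hr He. destruct (pow_lt_1_zero r) with (y := eps) as [N HN].
  rewrite Rabs_pos_eq; lra. exact He.
  exists N. specialize (HN N (le_n _)). rewrite Rabs_pos_eq in HN. exact HN.
  apply pow_le; lra.
Qed.

Lemma F_cont x : continuity_pt F x.
Proof.
  intros eps Heps. destruct (small_pow (/2) eps) as [N HN]; try lra.
  exists ((/3)^N). split. apply pow3_bounds.
  intros y [_ Hy]. simpl in Hy |- *. unfold R_dist in *.
  destruct (Rle_dec x y) as [Hle|Hle].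
  - pose proof (F_mod N x y) as HM. pose proof (F_mon x y Hle) as HMo.
    assert (Ha : Rabs (y - x) = y - x) by (apply Rabs_pos_eq; lra).
    assert (Hb : Rabs (F y - F x) = F y - F x) by (apply Rabs_pos_eq; lra).
    rewrite Ha in Hy. rewrite Hb.
    assert (F y - F x <= (/2)^N) by (apply HM; lra). lra.
  - pose proof (F_mod N y x) as HM. pose proof (F_mon y x) as HMo.
    assert (F y <= F x) by (apply HMo; lra).
    assert (Ha : Rabs (y - x) = - (y - x)) by (apply Rabs_left1; lra).
    assert (Hb : Rabs (F y - F x) = - (F y - F x)) by (apply Rabs_left1; lra).
    rewrite Ha in Hy. rewrite Hb.
    assert (F x - F y <= (/2)^N) by (apply HM; lra). lra.
Qed.

Lemma F_top n : forall x, x <= 1 - (/3)^n -> F x <= 1 - (/2)^n.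
Proof.
  induction n as [|n IH]; intros x Hx; simpl in *.
  - rewrite F_neg; lra.
  - pose proof (pow3_bounds n). pose proof (pow2_bounds n).
    destruct (Rle_dec x (2/3)).
    + assert (F x <= 1/2). { rewrite <- (F_2 (2/3)) by lra. apply F_mon; lra. } lra.
    + rewrite F_3 by lra. pose proof (IH (3*x-2)). lra.
Qed.

Lemma F_lt1 x : x < 1 -> F x < 1.
Proof.
  intros Hx. destruct (small_pow (/3) (1-x)) as [N HN]; try lra.
  pose proof (F_top N x). pose proof (pow2_bounds N). lra.
Qed.

End Basics.

Lemma cdf_unique F G : is_cantor_cdf F -> is_cantor_cdf G -> forall x, F x = G x.
Proof.
  intros HF HG.
  assert (Hn : forall n x, Rabs (F x - G x) <= (/2)^n).
  { induction n as [|n IH]; intros x.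
    - simpl. pose proof (F_ge0 F HF x); pose proof (F_le1 F HF x);
      pose proof (F_ge0 G HG x); pose proof (F_le1 G HG x).
      unfold Rabs; destruct Rcase_abs; lra.
    - simpl. destruct (Rle_dec x 0).
      { rewrite (F_neg F HF), (F_neg G HG) by lra. rewrite Rminus_diag, Rabs_R0.
        pose proof (pow2_bounds n); lra. }
      destruct (Rle_dec 1 x).
      { rewrite (F_ge1 F HF), (F_ge1 G HG) by lra. rewrite Rminus_diag, Rabs_R0.
        pose proof (pow2_bounds n); lra. }
      destruct (Rle_dec x (1/3)).
      { rewrite (F_1 F HF), (F_1 G HG) by lra.
        replace (F (3*x)/2 - G (3*x)/2) with (/2 * (F (3*x) - G (3*x))) by field.
        rewrite Rabs_mult, Rabs_pos_eq by lra. specialize (IH (3*x)). lra. }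
      destruct (Rle_dec (2/3) x).
      { rewrite (F_3 F HF), (F_3 G HG) by lra.
        replace (1/2 + F (3*x-2)/2 - (1/2 + G (3*x-2)/2)) with (/2 * (F (3*x-2) - G (3*x-2))) by field.
        rewrite Rabs_mult, Rabs_pos_eq by lra. specialize (IH (3*x-2)). lra. }
      rewrite (F_2 F HF), (F_2 G HG) by lra. rewrite Rminus_diag, Rabs_R0.
      pose proof (pow2_bounds n); lra. }
  intros x. destruct (Req_dec (F x) (G x)) as [|Hne]; auto. exfalso.
  assert (0 < Rabs (F x - G x)) by (apply Rabs_pos_lt; lra).
  destruct (small_pow (/2) (Rabs (F x - G x))) as [N HN]; try lra.
  specialize (Hn N x). lra.
Qed.

Lemma F_sym F : is_cantor_cdf F -> forall x, F (1 - x) = 1 - F x.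
Proof.
  intros HF.
  assert (HG : is_cantor_cdf (fun x => 1 - F (1 - x))).
  { repeat split.
    - intros x y H. pose proof (F_mon F HF (1-y) (1-x)). lra.
    - intros x H. rewrite (F_ge1 F HF) by lra. lra.
    - intros x H. rewrite (F_neg F HF) by lra. lra.
    - intros x H. rewrite (F_3 F HF) by lra. replace (3*(1-x)-2) with (1 - 3*x) by ring. lra.
    - intros x H. rewrite (F_2 F HF) by lra. lra.
    - intros x H. rewrite (F_1 F HF) by lra.
      replace (3*(1-x)) with (1 - (3*x-2)) by ring. lra. }
  intros x. pose proof (cdf_unique F _ HF HG x). lra.
Qed.



Lemma link f a b : ex_RInt f a b -> Defs.RInt f a b = RInt f a b.
Proof.
  intros Hex. unfold Defs.RInt.
  destruct (epsilon_spec (inhabits 0) (fun I => exists pr : Riemann_integrable f a b, RiemannInt pr = I)) as [pr Hpr].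
  { exists (RiemannInt (ex_RInt_Reals_0 f a b Hex)). eauto. }
  rewrite <- Hpr. symmetry. apply RInt_Reals.
Qed.

Lemma CR_bounds f a b lo hi : a <= b -> ex_RInt f a b ->
  (forall x, a < x < b -> lo <= f x <= hi) -> lo * (b - a) <= RInt f a b <= hi * (b - a).
Proof.
  intros Hab Hex Hb. split.
  - replace (lo * (b-a)) with (RInt (fun _ => lo) a b).
    apply RInt_le; auto. apply ex_RInt_const. intros; apply Hb; auto.
    rewrite RInt_const. unfold scal; simpl; unfold mult; simpl. ring.
  - replace (hi * (b-a)) with (RInt (fun _ => hi) a b).
    apply RInt_le; auto. apply ex_RInt_const. intros; apply Hb; auto.
    rewrite RInt_const. unfold scal; simpl; unfold mult; simpl. ring.
Qed.

Section Integrals.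
Variable F : R -> R.
Hypothesis HF : is_cantor_cdf F.

Definition G u := 1 - F u.

Lemma F_contc z : continuous F z.
Proof. apply continuity_pt_filterlim. apply (F_cont F HF). Qed.
Lemma G_contc z : continuous G z.
Proof. apply continuity_pt_filterlim. unfold G. apply continuity_pt_minus.
  apply continuity_pt_const. intros ? ?; reflexivity. apply (F_cont F HF). Qed.
Lemma exF a b : ex_RInt F a b.
Proof. apply (@ex_RInt_continuous R_CompleteNormedModule). intros; apply F_contc. Qed.
Lemma exG a b : ex_RInt G a b.
Proof. apply (@ex_RInt_continuous R_CompleteNormedModule). intros; apply G_contc. Qed.

Lemma G_chasles a b c : RInt G a b + RInt G b c = RInt G a c.
Proof. apply (RInt_Chasles G a b c (exG a b) (exG b c)). Qed.

Lemma G_bounds a b : a <= b -> 0 <= RInt G a b <= b - a.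
Proof.
  intros H. pose proof (CR_bounds G a b 0 1 H (exG a b)) as B.
  assert (0 * (b-a) <= RInt G a b <= 1 * (b-a)); [|lra].
  apply B. intros. unfold G. pose proof (F_ge0 F HF x); pose proof (F_le1 F HF x); lra.
Qed.

Lemma G_bounds2 a b : a <= b -> (1 - F b) * (b - a) <= RInt G a b <= (1 - F a) * (b - a).
Proof.
  intros H. apply CR_bounds; auto. apply exG.
  intros x Hx. unfold G. pose proof (F_mon F HF a x); pose proof (F_mon F HF x b). lra.
Qed.

Lemma CR_sym a b : RInt G a b = RInt F (1 - b) (1 - a).
Proof.
  pose proof (RInt_comp_lin F (-1) 1 a b (exF _ _)) as E.
  rewrite RInt_ext with (g := fun y => - (G y)) in E.
  2:{ intros x _. unfold scal, G; simpl; unfold mult; simpl.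
      replace (-1 * x + 1) with (1 - x) by ring. rewrite (F_sym F HF). ring. }
  pose proof (RInt_opp G a b (exG a b)) as E2.
  change (RInt (fun x => - G x) a b = - RInt G a b) in E2.
  pose proof (opp_RInt_swap F (1-b) (1-a) (exF _ _)) as E3.
  change (- RInt F (1-b) (1-a) = RInt F (1-a) (1-b)) in E3.
  replace (-1 * a + 1) with (1 - a) in E by ring.
  replace (-1 * b + 1) with (1 - b) in E by ring.
  lra.
Qed.

Lemma G_plus_F a b : RInt G a b + RInt F a b = b - a.
Proof.
  pose proof (RInt_plus G F a b (exG a b) (exF a b)) as E.
  change (RInt (fun x => G x + F x) a b = RInt G a b + RInt F a b) in E.
  rewrite <- E.
  rewrite RInt_ext with (g := fun _ => 1).
  rewrite RInt_const. unfold scal; simpl; unfold mult; simpl. ring.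
  intros x _. change (G x + F x = 1). unfold G. ring.
Qed.

Lemma intF01 : RInt F 0 1 = 1/2.
Proof.
  pose proof (CR_sym 0 1). pose proof (G_plus_F 0 1).
  replace (1-1) with 0 in H by ring. replace (1-0) with 1 in H by ring. lra.
Qed.
Lemma intG01 : RInt G 0 1 = 1/2.
Proof. pose proof intF01. pose proof (G_plus_F 0 1). lra. Qed.

Lemma intG_mid a b : 1/3 <= a <= b -> b <= 2/3 -> RInt G a b = (b - a) / 2.
Proof.
  intros H1 H2. pose proof (CR_bounds G a b (1/2) (1/2) ltac:(lra) (exG a b)) as B.
  assert (1/2 * (b-a) <= RInt G a b <= 1/2 * (b-a)); [|lra].
  apply B. intros. unfold G. rewrite (F_2 F HF) by lra. lra.
Qed.

Lemma intG_last : RInt G (2/3) 1 = 1/12.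
Proof.
  pose proof (RInt_comp_lin G 3 (-2) (2/3) 1 (exG _ _)) as E.
  replace (3 * (2/3) + -2) with 0 in E by field.
  replace (3 * 1 + -2) with 1 in E by ring.
  rewrite intG01 in E.
  rewrite RInt_ext with (g := fun y => 6 * G y) in E.
  2:{ intros x Hx. rewrite Rmin_left in Hx by lra. rewrite Rmax_right in Hx by lra.
      unfold scal, G; simpl; unfold mult; simpl.
      rewrite (F_3 F HF x) by lra. replace (3 * x + -2) with (3*x-2) by ring. field. }
  pose proof (RInt_scal G (2/3) 1 6 (exG _ _)) as E2.
  change (RInt (fun x => 6 * G x) (2/3) 1 = 6 * RInt G (2/3) 1) in E2.
  lra.
Qed.

Lemma intG_third : RInt G (1/3) 1 = 1/4.
Proof.
  pose proof (G_chasles (1/3) (2/3) 1) as E. rewrite intG_last, (intG_mid (1/3) (2/3)) in E by lra. lra.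
Qed.

End Integrals.



Section Mrl.
Variable F : R -> R.
Hypothesis HF : is_cantor_cdf F.

Lemma mrl_eq x : x < 1 -> mrl F x = RInt (G F) x 1 / (1 - F x).
Proof.
  intros Hx. unfold mrl. destruct (Rlt_dec x 1); [|lra].
  rewrite (link (G F)) by apply (exG F HF). unfold Rdiv. ring.
Qed.

Lemma mrl_J x : x < 1 -> mrl F x * (1 - F x) = RInt (G F) x 1.
Proof.
  intros Hx. rewrite mrl_eq by auto. pose proof (F_lt1 F HF x Hx). field. lra.
Qed.

Lemma mrl_ge0 x : 0 <= mrl F x.
Proof.
  destruct (Rlt_dec x 1).
  - rewrite mrl_eq by auto. pose proof (F_lt1 F HF x r).
    pose proof (G_bounds F HF x 1). apply Rdiv_le_0_compat; lra.
  - unfold mrl. destruct (Rlt_dec x 1); lra.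
Qed.

Lemma mrl_le x : x < 1 -> mrl F x <= 1 - x.
Proof.
  intros Hx. pose proof (mrl_J x Hx). pose proof (F_lt1 F HF x Hx).
  pose proof (G_bounds2 F HF x 1). pose proof (mrl_ge0 x).
  assert (mrl F x * (1 - F x) <= (1 - x) * (1 - F x)) by nra.
  apply Rmult_le_reg_r with (1 - F x); lra.
Qed.

Lemma mrl_1 : mrl F 1 = 0.
Proof. unfold mrl. destruct (Rlt_dec 1 1); lra. Qed.

Lemma J_cont x : continuity_pt (fun y => RInt (G F) y 1) x.
Proof.
  intros eps Heps. exists eps. split; auto.
  intros y [_ Hy]. simpl in *. unfold R_dist in *.
  pose proof (G_chasles F HF y x 1) as C1.
  pose proof (G_chasles F HF y x y) as C2. rewrite RInt_point in C2.
  destruct (Rle_dec y x).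
  - pose proof (G_bounds F HF y x r).
    rewrite Rabs_left1 in Hy by lra.
    apply Rabs_def1; change (zero : R) with 0 in C2; lra.
  - pose proof (G_bounds F HF x y ltac:(lra)).
    rewrite Rabs_pos_eq in Hy by lra.
    apply Rabs_def1; change (zero : R) with 0 in C2; lra.
Qed.

Lemma part_i_cont x : 0 <= x <= 1 -> limit1_in (mrl F) (fun y => 0 <= y <= 1) (mrl F x) x.
Proof.
  intros Hx. destruct (Req_dec x 1) as [E|Ne].
  - subst x. rewrite mrl_1. intros eps Heps. exists eps. split; auto.
    intros y [Dy Hy]. simpl in *. unfold R_dist in *.
    destruct (Req_dec y 1). subst y. rewrite mrl_1. rewrite Rminus_0_r, Rabs_R0; lra.
    pose proof (mrl_le y ltac:(lra)). pose proof (mrl_ge0 y).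
    rewrite Rabs_left1 in Hy by lra. rewrite Rminus_0_r, Rabs_pos_eq by lra. lra.
  - assert (Hc : continuity_pt (div_fct (fun y => RInt (G F) y 1) (G F)) x).
    { apply continuity_pt_div. apply J_cont.
      change (continuity_pt (minus_fct (fct_cte 1) F) x).
      apply continuity_pt_minus. apply continuity_pt_const. intros ? ?; reflexivity.
      apply (F_cont F HF). unfold G. pose proof (F_lt1 F HF x ltac:(lra)). lra. }
    intros eps Heps. destruct (Hc eps Heps) as [alp [Ha H]].
    exists (Rmin alp (1 - x)). split. apply Rmin_glb_lt; lra.
    intros y [Dy Hy]. simpl in *. unfold R_dist in *.
    pose proof (Rmin_l alp (1-x)); pose proof (Rmin_r alp (1-x)).
    apply Rabs_def2 in Hy as Hy2.
    rewrite (mrl_eq y), (mrl_eq x) by lra.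
    destruct (Req_dec y x) as [Eyx|Nyx]. { subst y. rewrite Rminus_diag, Rabs_R0. lra. }
    apply (H y). split. unfold D_x, no_cond. split; auto.
    simpl; unfold R_dist; lra.
Qed.

Lemma part_i_formula x : 0 <= x < 1 -> mrl F x = / F (1 - x) * Defs.RInt F 0 (1 - x).
Proof.
  intros Hx. rewrite (link F) by apply (exF F HF). rewrite (F_sym F HF).
  rewrite mrl_eq by lra. rewrite (CR_sym F HF). replace (1 - 1) with 0 by ring.
  unfold Rdiv. ring.
Qed.

End Mrl.



Section Two.
Variable F : R -> R.
Hypothesis HF : is_cantor_cdf F.

Lemma cantor_interval n : forall x, cantor_level n x ->
  exists a, 0 <= a /\ a + (/3)^n <= 1 /\ a <= x <= a + (/3)^n /\ F (a + (/3)^n) - F a = (/2)^n.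
Proof.
  induction n as [|n IH]; intros x Hx; simpl in *.
  - exists 0. rewrite Rplus_0_l. rewrite (F_ge1 F HF 1), (F_neg F HF 0) by lra. lra.
  - pose proof (pow3_bounds n). set (e := (/3)^n) in *.
    destruct Hx as [Hx|Hx]; destruct (IH _ Hx) as [a [A1 [A2 [A3 A4]]]].
    + exists (a/3). rewrite (F_1 F HF (a/3)) by lra. rewrite (F_1 F HF (a/3 + /3*e)) by lra.
      replace (3 * (a/3)) with a by field. replace (3 * (a/3 + /3*e)) with (a + e) by field.
      lra.
    + exists ((a+2)/3). rewrite (F_3 F HF ((a+2)/3)) by lra.
      rewrite (F_3 F HF ((a+2)/3 + /3*e)) by lra.
      replace (3 * ((a+2)/3) - 2) with a by field. replace (3 * ((a+2)/3 + /3*e) - 2) with (a + e) by field.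
      lra.
Qed.

Lemma level_bounds n : forall x, cantor_level n x -> 0 <= x <= 1.
Proof.
  induction n as [|n IH]; intros x Hx; simpl in *; auto.
  destruct Hx as [Hx|Hx]; apply IH in Hx; lra.
Qed.

Lemma gap n : forall x, 0 <= x <= 1 -> ~ cantor_level n x ->
  exists p q, 0 <= p < x /\ x < q <= 1 /\ forall y, p <= y <= q -> F y = F x.
Proof.
  induction n as [|n IH]; intros x Hx Hn; simpl in *.
  - tauto.
  - destruct (Rle_dec x (1/3)).
    + destruct (IH (3*x)) as [p [q [P1 [P2 P3]]]]; [lra| tauto |].
      exists (p/3), (q/3). split; [lra|split;[lra|]].
      intros y Hy. rewrite (F_1 F HF y), (F_1 F HF x) by lra. rewrite (P3 (3*y)) by lra. reflexivity.
    + destruct (Rle_dec (2/3) x).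
      * destruct (IH (3*x-2)) as [p [q [P1 [P2 P3]]]]; [lra| tauto |].
        exists ((p+2)/3), ((q+2)/3). split; [lra|split;[lra|]].
        intros y Hy. rewrite (F_3 F HF y), (F_3 F HF x) by lra. rewrite (P3 (3*y-2)) by lra. reflexivity.
      * exists (1/3), (2/3). split; [lra|split;[lra|]].
        intros y Hy. rewrite (F_2 F HF y), (F_2 F HF x) by lra. reflexivity.
Qed.

Lemma key_ineq a b : 0 < a < b -> b < 1 -> mrl F b <= mrl F a * (b / a) ->
  mrl F a * (F b - F a) <= (b - a) * (1 + / a).
Proof.
  intros Hab Hb Hm.
  pose proof (mrl_J F HF a ltac:(lra)) as Ja. pose proof (mrl_J F HF b Hb) as Jb.
  pose proof (G_chasles F HF a b 1) as C. pose proof (G_bounds2 F HF a b ltac:(lra)) as Bd.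
  pose proof (F_ge0 F HF a). pose proof (F_le1 F HF b). pose proof (F_ge0 F HF b).
  pose proof (mrl_ge0 F HF a) as ma0. pose proof (mrl_le F HF a ltac:(lra)) as ma1.
  set (t := b / a) in *.
  assert (Ht : t - 1 = (b - a) * / a) by (unfold t; field; lra).
  assert (Ht1 : 0 <= t - 1) by (rewrite Ht; apply Rmult_le_pos; [lra| left; apply Rinv_0_lt_compat; lra]).
  assert (P1 : mrl F b * (1 - F b) <= mrl F a * t * (1 - F b)) by (apply Rmult_le_compat_r; lra).
  assert (P2 : mrl F a * (1 - F b) <= 1) by nra.
  assert (P3 : mrl F a * (t - 1) * (1 - F b) <= t - 1) by nra.
  assert (P4 : (1 - F a) * (b - a) <= b - a) by nra.
  assert (E : mrl F a * (F b - F a) = mrl F a * (1 - F a) - mrl F a * t * (1 - F b) + mrl F a * (t - 1) * (1 - F b)) by ring.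
  rewrite E. rewrite Ht in P3 |- *. lra.
Qed.

Lemma m_lower x : 0 < x < 1 -> exists c, 0 < c /\ forall a, a <= (1 + x) / 2 -> c <= mrl F a.
Proof.
  intros Hx. set (t := (1 + x)/2). set (t' := (1 + t)/2).
  pose proof (F_lt1 F HF t' ltac:(unfold t', t; lra)).
  exists ((1 - F t') * (t' - t)). split. apply Rmult_lt_0_compat; unfold t', t in *; lra.
  intros a Ha.
  pose proof (G_chasles F HF a t 1). pose proof (G_chasles F HF t t' 1).
  pose proof (G_bounds F HF a t Ha). pose proof (G_bounds F HF t' 1 ltac:(unfold t', t; lra)).
  pose proof (G_bounds2 F HF t t' ltac:(unfold t', t; lra)).
  pose proof (mrl_J F HF a ltac:(unfold t in Ha; lra)).
  pose proof (mrl_ge0 F HF a). pose proof (F_ge0 F HF a). pose proof (F_lt1 F HF a ltac:(unfold t in Ha; lra)).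
  assert (mrl F a * (1 - F a) <= mrl F a) by nra. lra.
Qed.

Lemma cantor_not_ld x : 0 < x < 1 -> cantor_set x ->
  (exists d, 0 < d /\ forall y z, Rabs (y - x) < d -> Rabs (z - x) < d -> 0 < y -> y < z -> z < 1 ->
      mrl F z <= mrl F y * (z / y)) -> False.
Proof.
  intros Hx HC [d [Hd P]].
  destruct (m_lower x Hx) as [c [Hc Hlow]].
  set (K := 1 + 2 / x).
  assert (HK : 0 < K) by (unfold K; assert (0 < 2/x) by (apply Rdiv_lt_0_compat; lra); lra).
  set (eta := Rmin (Rmin d (x/2)) (Rmin ((1-x)/2) (c/K))).
  assert (Heta : 0 < eta).
  { unfold eta. apply Rmin_glb_lt; apply Rmin_glb_lt; try lra. apply Rdiv_lt_0_compat; lra. }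
  destruct (small_pow (2/3) eta) as [N HN]; try lra.
  assert (E1 : eta <= d) by (unfold eta; pose proof (Rmin_l (Rmin d (x/2)) (Rmin ((1-x)/2) (c/K))); pose proof (Rmin_l d (x/2)); lra).
  assert (E2 : eta <= x/2) by (unfold eta; pose proof (Rmin_l (Rmin d (x/2)) (Rmin ((1-x)/2) (c/K))); pose proof (Rmin_r d (x/2)); lra).
  assert (E3 : eta <= (1-x)/2) by (unfold eta; pose proof (Rmin_r (Rmin d (x/2)) (Rmin ((1-x)/2) (c/K))); pose proof (Rmin_l ((1-x)/2) (c/K)); lra).
  assert (E4 : eta <= c/K) by (unfold eta; pose proof (Rmin_r (Rmin d (x/2)) (Rmin ((1-x)/2) (c/K))); pose proof (Rmin_r ((1-x)/2) (c/K)); lra).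
  pose proof (pow2_bounds N) as Hh. pose proof (pow3_bounds N) as He.
  assert (Eeh : (/3)^N = (2/3)^N * (/2)^N).
  { rewrite <- Rpow_mult_distr. f_equal. field. }
  assert (Hq0 : 0 <= (2/3)^N) by (apply pow_le; lra).
  assert (Hele : (/3)^N <= (2/3)^N) by (rewrite Eeh; nra).
  destruct (cantor_interval N x (HC N)) as [a [A1 [A2 [A3 A4]]]].
  set (e := (/3)^N) in *. set (h := (/2)^N) in *. set (q := (2/3)^N) in *.
  set (b := a + e) in *. assert (Hbdef : b = a + e) by reflexivity. clearbody b.
  assert (Ha : x/2 < a) by (idtac; lra).
  assert (Hb : b < 1) by lra.
  assert (Hm : mrl F b <= mrl F a * (b / a)).
  { apply (P a b); try (apply Rabs_def1); lra. }
  pose proof (key_ineq a b ltac:(lra) Hb Hm) as KI.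
  replace (b - a) with e in KI by lra. rewrite A4 in KI.
  assert (Hia : / a <= 2 / x).
  { replace (2 / x) with (/ (x/2)) by (field; lra). apply Rinv_le_contravar; lra. }
  assert (KI2 : mrl F a * h <= e * K) by (unfold K; nra).
  assert (Hca : c <= mrl F a) by (apply Hlow; lra).
  assert (Hqk : q * K < c).
  { assert (q < c / K) by lra. apply Rmult_lt_compat_r with (r := K) in H; auto.
    unfold Rdiv in H. rewrite Rmult_assoc, Rinv_l in H by lra. lra. }
  assert (e * K < c * h) by (rewrite Eeh; nra).
  nra.
Qed.

End Two.



Section Five.
Variable F : R -> R.
Hypothesis HF : is_cantor_cdf F.

Lemma ld_P f x : (f = mrl F \/ f = gmrl F) -> locally_decreasing f x ->
  exists d, 0 < d /\ forall y z, Rabs (y - x) < d -> Rabs (z - x) < d -> 0 < y -> y < z -> z < 1 ->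
      mrl F z <= mrl F y * (z / y).
Proof.
  intros Hf [U [HU [Ux Hdec]]]. destruct (HU x Ux) as [dl Hdl].
  exists dl. split. apply cond_pos. intros y z Hy Hz H0 Hyz Hz1.
  pose proof (Hdec y z (Hdl y Hy) (Hdl z Hz) ltac:(lra) ltac:(lra) ltac:(lra)) as D.
  pose proof (mrl_ge0 F HF y). pose proof (mrl_ge0 F HF z).
  assert (Ezy : z / y = 1 + (z - y) / y) by (field; lra).
  assert (0 <= (z - y) / y) by (apply Rdiv_le_0_compat; lra).
  destruct Hf; subst f.
  - rewrite Ezy. nra.
  - unfold gmrl in D.
    replace (mrl F z) with (mrl F z / z * z) by (field; lra).
    replace (mrl F y * (z / y)) with (mrl F y / y * z) by (field; lra).
    apply Rmult_le_compat_r; lra.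
Qed.

Lemma gap_ld x : 0 < x < 1 -> ~ cantor_set x ->
  locally_decreasing (mrl F) x /\ locally_decreasing (gmrl F) x.
Proof.
  intros Hx HC. destruct (not_all_ex_not _ _ HC) as [n Hn].
  destruct (gap F HF n x ltac:(lra) Hn) as [p [q [P1 [P2 P3]]]].
  assert (Hopen : open_set (fun y => p < y < q)).
  { intros y Hy. assert (Hpos : 0 < Rmin (y - p) (q - y)) by (apply Rmin_glb_lt; lra).
    exists (mkposreal _ Hpos). intros z Hz. unfold disc in Hz; simpl in Hz.
    apply Rabs_def2 in Hz. pose proof (Rmin_l (y-p) (q-y)); pose proof (Rmin_r (y-p) (q-y)). lra. }
  assert (Hm : forall y z, p < y < q -> p < z < q -> 0 < y < 1 -> 0 < z < 1 -> y <= z -> mrl F z <= mrl F y).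
  { intros y z Hy Hz Hy1 Hz1 Hyz.
    pose proof (P3 y ltac:(lra)). pose proof (P3 z ltac:(lra)).
    pose proof (F_lt1 F HF x ltac:(lra)).
    pose proof (mrl_J F HF y ltac:(lra)). pose proof (mrl_J F HF z ltac:(lra)).
    pose proof (G_chasles F HF y z 1). pose proof (G_bounds F HF y z Hyz).
    apply Rmult_le_reg_r with (1 - F x). lra. 
    assert (mrl F z * (1 - F z) <= mrl F y * (1 - F y)) by lra.
    rewrite H, H0 in H6. lra. }
  split; exists (fun y => p < y < q); split; auto; split; try lra.
  - intros y z Hy Hz Hy1 Hz1 Hyz. apply Hm; auto.
  - intros y z Hy Hz Hy1 Hz1 Hyz. unfold gmrl.
    pose proof (Hm y z Hy Hz Hy1 Hz1 Hyz). pose proof (mrl_ge0 F HF z).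
    unfold Rdiv. apply Rle_trans with (mrl F z * / y).
    apply Rmult_le_compat_l; auto. apply Rinv_le_contravar; lra.
    apply Rmult_le_compat_r; auto. left; apply Rinv_0_lt_compat; lra.
Qed.

Lemma part_ii x : 0 < x < 1 ->
  (locally_decreasing (mrl F) x <-> ~ cantor_set x) /\
  (locally_decreasing (gmrl F) x <-> ~ cantor_set x).
Proof.
  intros Hx. split; split.
  - intros Hld HC. apply (cantor_not_ld F HF x Hx HC). apply (ld_P (mrl F)); auto.
  - intros HC. apply (gap_ld x Hx HC).
  - intros Hld HC. apply (cantor_not_ld F HF x Hx HC). apply (ld_P (gmrl F)); auto.
  - intros HC. apply (gap_ld x Hx HC).
Qed.

Lemma F29 : F (2/9) = 1/4.
Proof.
  rewrite (F_1 F HF) by lra. replace (3 * (2/9)) with (2/3) by field.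
  rewrite (F_2 F HF) by lra. field.
Qed.

Lemma mrl_mid x : 1/3 <= x <= 2/3 -> mrl F x = 5/6 - x.
Proof.
  intros Hx. pose proof (mrl_J F HF x ltac:(lra)) as J.
  rewrite (F_2 F HF x Hx) in J.
  pose proof (G_chasles F HF x (2/3) 1). rewrite (intG_last F HF) in H.
  rewrite (intG_mid F HF x (2/3)) in H by lra. lra.
Qed.

Lemma part_iii x : 0 <= x <= 1 -> (mrl F x = x <-> x = 5/12).
Proof.
  intros Hx. split.
  - intros E. destruct (Req_dec x 1) as [->|N1].
    { rewrite mrl_1 in E. lra. }
    destruct (Rle_dec x (2/3)).
    + destruct (Rle_dec (1/3) x).
      * rewrite mrl_mid in E by lra. lra.
      * exfalso. pose proof (mrl_J F HF x ltac:(lra)) as J.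
        pose proof (G_chasles F HF x (1/3) 1). rewrite (intG_third F HF) in H.
        pose proof (G_bounds2 F HF x (1/3) ltac:(lra)).
        rewrite (F_2 F HF (1/3)) in H0 by lra.
        rewrite E in J. pose proof (F_ge0 F HF x).
        destruct (Rle_dec (2/9) x).
        -- pose proof (F_mon F HF (2/9) x r0). rewrite F29 in H2. nra.
        -- nra.
    + pose proof (mrl_le F HF x ltac:(lra)). lra.
  - intros ->. rewrite mrl_mid by lra. field.
Qed.

End Five.


Import Defs.

Theorem theorem1 (F : R -> R) (HF : is_cantor_cdf F) :
  (* (i) *)
  ((forall x, 0 <= x <= 1 -> limit1_in (mrl F) (fun y => 0 <= y <= 1) (mrl F x) x) /\
   (forall x, 0 <= x < 1 -> mrl F x = / F (1 - x) * RInt F 0 (1 - x))) /\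
  (* (ii) *)
  (forall x, 0 < x < 1 ->
     (locally_decreasing (mrl F) x <-> ~ cantor_set x) /\
     (locally_decreasing (gmrl F) x <-> ~ cantor_set x)) /\
  (* (iii) *)
  (forall x, 0 <= x <= 1 -> (mrl F x = x <-> x = 5/12)).
Proof.
  split; [split|split].
  - intros x Hx. apply (part_i_cont F HF x Hx).
  - intros x Hx. apply (part_i_formula F HF x Hx).
  - intros x Hx. apply (part_ii F HF x Hx).
  - intros x Hx. apply (part_iii F HF x Hx).
Qed.

Print Assumptions theorem1.
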